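(* Fix an integer $n\ge 1$ and $p\in(0,1]$. Let \[ \textsc{Pol}=\Big\{(\mathbf x,\mathbf y)\ge 0:\ x_{1,1}+y_{1,1}=1,\ \ x_{t,s}+y_{t,s}=\tfrac1t\sum_{\sigma=1}^{t-1}\big(y_{t-1,\sigma}+(1-p)x_{t-1,\sigma}\big)\ \ \forall\, t\in\{2,\dots,n\},\ s\in[t]\Big\}, \] where $\mathbf x=(x_{t,s})_{t\in[n],s\in[t]}$ and $\mathbf y=(y_{t,s})_{t\in[n],s\in[t]}$. (i) For every (possibly randomized) policy $\mathcal P$ for the SP-UA, the vector defined by $x_{t,s}=\Pr(\mathcal P \text{ reaches state }(t,s)\text{ and makes an offer})$ and $y_{t,s}=\Pr(\mathcal P\text{ reaches state }(t,s)\text{ and passes})$ belongs to $\textsc{Pol}$. (ii) Conversely, for every $(\mathbf x,\mathbf y)\in\textsc{Pol}$, the randomized policy $\mathcal P$ that in state $(1,1)$ makes an offer with probability $x_{1,1}$, and for $t>1$ in state $(t,s)$ makes an offer with probability \[ \frac{t\,x_{t,s}}{\sum_{\sigma=1}^{t-1}\big(y_{t-1,\sigma}+(1-p)x_{t-1,\sigma}\big)} \] (when the denominator is $0$, the state is reached with probability $0$ and the action there is arbitrary), satisfies $x_{t,s}=\Pr(\mathcal P\text{ reaches }(t,s)\text{ and makes an offer})$ and $y_{t,s}=\Pr(\mathcal P\text{ reaches }(t,s)\text{ and passes})$ for all $t\in[n]$, $s\in[t]$.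
   Context: Secretary problem with uncertain acceptance (SP-UA): fix an integer $n\ge1$ and $p\in(0,1]$. There are $n$ candidates with distinct overall ranks $1,\dots,n$ (rank $1$ is best). They arrive one at a time in an order given by a uniformly random permutation; $R_t\in[n]$ denotes the overall rank of the $t$-th arriving candidate and $r_t\in[t]$ its partial rank, i.e., its rank among the first $t$ arrivals. At each time $t$, the decision maker, having observed $r_1,\dots,r_t$, either makes an offer to the $t$-th candidate or passes, irrevocably; policies may randomize. An offered candidate accepts independently with probability $p$, in which case the process stops; otherwise the process moves to the next candidate. The process ends when an offer is accepted or after candidate $n$. The policy is in state $(t,s)$ when it is examining the $t$-th candidate and $r_t=s$; ''reaching state $(t,s)$'' means the process has not stopped before time $t$ and $r_t=s$. *)

(* Defs.v *)
From mathcomp Require Import all_boot all_order all_algebra all_fingroup.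
Set Implicit Arguments. Unset Strict Implicit. Unset Printing Implicit Defensive.
Import Order.TTheory GRing.Theory Num.Theory.
Local Open Scope ring_scope.

(* Arrival order: sigma : 'S_n, the candidate arriving at (0-based) position i
   has overall rank (sigma i).+1 (rank 1 = best). *)

Definition prank (n : nat) (sigma : 'S_n) (i : 'I_n) : nat :=
  (#|[set j : 'I_n | (j < i)%N && (sigma j < sigma i)%N]|).+1.

Definition pranks (n : nat) (sigma : 'S_n) : seq nat :=
  [seq prank sigma i | i <- enum 'I_n].

(* A (behavioral) randomized policy: P t rs as is the probability of making an
   offer at time t (1-based), having observed partial ranks rs = [r_1;...;r_t]
   and having taken past actions as = [a_1;...;a_(t-1)] (true = offer). *)
Definition policy (R : realFieldType) := nat -> seq nat -> seq bool -> R.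

Definition valid_policy (R : realFieldType) (P : policy R) : Prop :=
  forall t rs acts, 0 <= P t rs acts <= 1.

(* probability that, along the first t-1 steps with ranks rs and past actions
   acts (a tuple of length t-1), the policy takes exactly the actions acts and
   no offer is accepted *)
Definition path_weight (R : realFieldType) (p : R) (P : policy R)
    (t : nat) (rs : seq nat) (acts : (t.-1).-tuple bool) : R :=
  \prod_(k < t.-1)
     (let qk := P k.+1 (take k.+1 rs) (take k acts) in
      if nth false acts k then qk * (1 - p) else 1 - qk).

(* Pr(policy reaches state (t,s) and takes action b) (b = true: offer,
   b = false: pass), under a uniformly random arrival permutation. *)
Definition reach_prob (R : realFieldType) (n : nat) (p : R) (P : policy R)
    (t s : nat) (b : bool) : R :=
  (#|{perm 'I_n}|%:R)^-1 *
  \sum_(sigma : 'S_n) \sum_(acts : (t.-1).-tuple bool)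
     (if nth 0%N (pranks sigma) t.-1 == s then
        path_weight p P (take t (pranks sigma)) acts *
        (let q := P t (take t (pranks sigma)) acts in if b then q else 1 - q)
      else 0).

(* x, y are indexed 1-based: x t s for t in [n], s in [t]. *)
Definition lp_rhs (R : realFieldType) (p : R) (x y : nat -> nat -> R) (t : nat) : R :=
  \sum_(1 <= sg < t) (y t.-1 sg + (1 - p) * x t.-1 sg).

Definition inPol (R : realFieldType) (n : nat) (p : R) (x y : nat -> nat -> R) : Prop :=
  [/\ (forall t s, (1 <= t <= n)%N -> (1 <= s <= t)%N -> 0 <= x t s /\ 0 <= y t s),
      x 1%N 1%N + y 1%N 1%N = 1 &
      (forall t s, (2 <= t <= n)%N -> (1 <= s <= t)%N ->
         x t s + y t s = (t%:R)^-1 * lp_rhs p x y t)].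

Definition induced_policy (R : realFieldType) (n : nat) (p : R)
    (x y : nat -> nat -> R) (P : policy R) : Prop :=
  forall t rs acts, (1 <= t <= n)%N -> size rs = t -> size acts = t.-1 ->
    (t = 1%N -> P t rs acts = x 1%N 1%N) /\
    ((1 < t)%N -> lp_rhs p x y t != 0 ->
       P t rs acts = t%:R * x t (last 0%N rs) / lp_rhs p x y t).

(* Main.v *)
Require Import Defs.
From mathcomp Require Import all_boot all_order all_algebra all_fingroup.
From mathcomp Require Import zify ring lra.
Set Implicit Arguments. Unset Strict Implicit. Unset Printing Implicit Defensive.
Import Order.TTheory GRing.Theory Num.Theory.

Definition btw (u v w : nat) := (u < v < w) || (w < v < u).
Definition nb n (a : 'I_n) (s : 'S_n) (b : 'I_n) : bool :=
  (b < a) && [forall j : 'I_n, ((j < a) && (j != b)) ==> ~~ btw (s a) (s j) (s b)].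
Definition swp n (a b : 'I_n) (s : 'S_n) : 'S_n := (tperm a b * s)%g.

Lemma swpE n (a b : 'I_n) s x : swp a b s x = s (tperm a b x).
Proof. by rewrite /swp permM. Qed.
Lemma swp_ne n (a b : 'I_n) s x : x != a -> x != b -> swp a b s x = s x.
Proof. by move=> xa xb; rewrite swpE tpermD // eq_sym. Qed.
Lemma swp_a n (a b : 'I_n) s : swp a b s a = s b.
Proof. by rewrite swpE tpermL. Qed.
Lemma swp_b n (a b : 'I_n) s : swp a b s b = s a.
Proof. by rewrite swpE tpermR. Qed.
Lemma swpK n (a b : 'I_n) s : swp a b (swp a b s) = s.
Proof. by rewrite /swp mulgA tperm2 mul1g. Qed.

Lemma dv n (s : 'S_n) u v : u != v -> (nat_of_ord (s u) != s v).
Proof. by move=> uv; rewrite val_eqE (inj_eq (@perm_inj _ s)). Qed.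

Lemma ltne n (x a : 'I_n) : (x < a)%N -> x != a.
Proof. by move=> xa; apply: contraTneq xa => ->; rewrite ltnn. Qed.

Lemma nb_key n (a : 'I_n) s b : nb a s b -> forall j : 'I_n, (j < a)%N -> j != b -> ~~ btw (s a) (s j) (s b).
Proof. by move=> /andP[_ /forallP H] j ja jb; exact: (implyP (H j) (introT andP (conj ja jb))). Qed.

Lemma order_pres n (a : 'I_n) s b (x y : 'I_n) : nb a s b -> (x < a)%N -> (y < a)%N ->
  (swp a b s x < swp a b s y)%N = (s x < s y)%N.
Proof.
move=> H xa ya; have ba : (b < a)%N by case/andP: H.
have k := nb_key H; rewrite /btw in k.
have dab := dv s (ltne ba); rewrite eq_sym in dab.
case: (eqVneq x b) => [->|xb].
  case: (eqVneq y b) => [->|yb]; first by rewrite !ltnn.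
  rewrite swp_b (swp_ne _ (ltne ya) yb).
  have := k y ya yb; have := dv s (ltne ya); have := dv s yb; lia.
case: (eqVneq y b) => [->|yb].
  rewrite swp_b (swp_ne _ (ltne xa) xb).
  have := k x xa xb; have := dv s (ltne xa); have := dv s xb; lia.
by rewrite (swp_ne _ (ltne ya) yb) (swp_ne _ (ltne xa) xb).
Qed.

Lemma prank_pres n (a : 'I_n) s b (i : 'I_n) : nb a s b -> (i < a)%N -> prank (swp a b s) i = prank s i.
Proof.
move=> H ia; rewrite /prank; congr S; apply: eq_card => j; rewrite !inE.
case ji: (j < i)%N => //=; apply: order_pres => //; exact: ltn_trans ji ia.
Qed.

Lemma nb_swap n (a : 'I_n) s b : nb a s b -> nb a (swp a b s) b.
Proof.
move=> H; have ba : (b < a)%N by case/andP: H.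
apply/andP; split => //; apply/forallP => j; apply/implyP => /andP[ja jb].
rewrite swp_a swp_b (swp_ne _ (ltne ja) jb).
have := nb_key H ja jb; rewrite /btw; lia.
Qed.

Lemma rt_up n (a : 'I_n) s b : nb a s b -> (s a < s b)%N -> prank (swp a b s) a = (prank s a).+1.
Proof.
move=> H ab; have ba : (b < a)%N by case/andP: H.
rewrite /prank swp_a; congr S.
have -> : [set j : 'I_n | (j < a)%N && (swp a b s j < s b)%N] =
          b |: [set j : 'I_n | (j < a)%N && (s j < s a)%N].
  apply/setP => j; rewrite !inE.
  case: (eqVneq j b) => [->|jb]; first by rewrite ba swp_b ab.
  case ja: (j < a)%N => //=; rewrite (swp_ne _ (ltne ja) jb).
  have := nb_key H ja jb; have := dv s (ltne ja); have := dv s jb; rewrite /btw; lia.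
rewrite cardsU1 inE ba /=.
have -> : (s b < s a)%N = false by lia.
by [].
Qed.

Lemma nb_uniq n (a : 'I_n) s b1 b2 : nb a s b1 -> nb a s b2 ->
  (s a < s b1)%N = (s a < s b2)%N -> b1 = b2.
Proof.
move=> H1 H2 e; apply/eqP; apply/negPn/negP => b12.
have b1a : (b1 < a)%N by case/andP: H1.
have b2a : (b2 < a)%N by case/andP: H2.
have b21 : b2 != b1 by rewrite eq_sym.
have := nb_key H1 b2a b21; have := nb_key H2 b1a b12.
have := dv s b12; have := dv s (ltne b1a); have := dv s (ltne b2a); rewrite /btw.
move: e; lia.
Qed.

Lemma card_lt n k : (k <= n)%N -> #|[set j : 'I_n | (j < k)%N]| = k.
Proof.
move=> kn.
have -> : [set j : 'I_n | (j < k)%N] = widen_ord kn @: [set: 'I_k].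
  apply/setP => j; rewrite inE; apply/idP/idP.
    by move=> jk; apply/imsetP; exists (Ordinal jk) => //; apply: val_inj.
  by case/imsetP=> i _ ->; rewrite /= ltn_ord.
rewrite card_imset; first by rewrite cardsT card_ord.
by move=> x y [] /val_inj.
Qed.

Lemma prank_ge1 n (s : 'S_n) i : (1 <= prank s i)%N.
Proof. by []. Qed.

Lemma prank_le n (s : 'S_n) (i : 'I_n) : (prank s i <= i.+1)%N.
Proof.
rewrite /prank ltnS -{2}(@card_lt n i (ltnW (ltn_ord i))).
by apply: subset_leq_card; apply/subsetP => j; rewrite !inE => /andP[].
Qed.

Lemma up_ex n (a : 'I_n) s : (prank s a < a.+1)%N -> exists b, nb a s b && (s a < s b)%N.
Proof.
move=> Hr.
have [j0 /andP[j0a aj0]] : exists j : 'I_n, (j < a)%N && (s a < s j)%N.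
  case: (boolP [exists j : 'I_n, (j < a)%N && (s a < s j)%N]) => [/existsP//|].
  rewrite negb_exists => /forallP H; exfalso; move: Hr; rewrite /prank ltnS.
  have -> : [set j : 'I_n | (j < a)%N && (s j < s a)%N] = [set j : 'I_n | (j < a)%N].
    apply/setP => j; rewrite !inE; case ja: (j < a)%N => //=.
    have := H j; rewrite ja /= => h; have := dv s (ltne ja); lia.
  by rewrite card_lt ?ltnn // ltnW.
case: (@arg_minnP _ j0 (fun j : 'I_n => (j < a)%N && (s a < s j)%N) (fun j => nat_of_ord (s j)));
  first by rewrite j0a aj0.
move=> b /andP[ba ab] Hmin; exists b; rewrite ab andbT.
apply/andP; split => //; apply/forallP => j; apply/implyP => /andP[ja jb]; rewrite /btw.
case: (boolP (s a < s j)%N) => h.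
  have := Hmin j; rewrite ja h /= => h2; have := h2 isT; lia.
lia.
Qed.

Lemma down_ex n (a : 'I_n) s : (1 < prank s a)%N -> exists b, nb a s b && (s b < s a)%N.
Proof.
rewrite /prank ltnS card_gt0 => /set0Pn [j0]; rewrite inE => /andP[j0a aj0].
case: (@arg_maxnP _ j0 (fun j : 'I_n => (j < a)%N && (s j < s a)%N) (fun j => nat_of_ord (s j)));
  first by rewrite j0a aj0.
move=> b /andP[ba ab] Hmax; exists b; rewrite ab andbT.
apply/andP; split => //; apply/forallP => j; apply/implyP => /andP[ja jb]; rewrite /btw.
case: (boolP (s j < s a)%N) => h.
  have := Hmax j; rewrite ja h /= => h2; have := h2 isT; lia.
lia.
Qed.

Local Open Scope ring_scope.

Lemma sum_shift (R : zmodType) n (a : 'I_n) (F : 'S_n -> R) (s : nat) :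
  (forall x y : 'S_n, (forall i : 'I_n, (i < a)%N -> prank x i = prank y i) -> F x = F y) ->
  (1 <= s)%N -> (s < a.+1)%N ->
  \sum_(x : 'S_n) (if prank x a == s then F x else 0) =
  \sum_(x : 'S_n) (if prank x a == s.+1 then F x else 0).
Proof.
move=> HF s1 sa.
pose up (x : 'S_n) := odflt a [pick b | nb a x b && (x a < x b)%N].
pose dn (x : 'S_n) := odflt a [pick b | nb a x b && (x b < x a)%N].
have upP x : (prank x a < a.+1)%N -> nb a x (up x) && (x a < x (up x))%N.
  move=> h; rewrite /up; case: pickP => [b //|H].
  by have [b hb] := up_ex h; rewrite H in hb.
have dnP x : (1 < prank x a)%N -> nb a x (dn x) && (x (dn x) < x a)%N.
  move=> h; rewrite /dn; case: pickP => [b //|H].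
  by have [b hb] := down_ex h; rewrite H in hb.
pose phi x := if prank x a == s then swp a (up x) x
              else if prank x a == s.+1 then swp a (dn x) x else x.
have sneq : (s.+1 == s) = false by rewrite gtn_eqF.
have phiK : involutive phi.
  move=> x; rewrite {2}/phi.
  case: (eqVneq (prank x a) s) => e1.
    have hx : (prank x a < a.+1)%N by rewrite e1.
    have /andP[h1 h2] := upP x hx.
    set b := up x; set x' := swp a b x.
    have r1 : prank x' a = s.+1 by rewrite /x' rt_up // e1.
    rewrite /phi r1 sneq eqxx.
    have h3 := nb_swap h1.
    have hx' : (1 < prank x' a)%N by rewrite r1 ltnS.
    have /andP[h4 h5] := dnP x' hx'.
    have -> : dn x' = b.
      apply: (nb_uniq h4 h3).
      move: h5 h2; rewrite /x' /b swp_a swp_b; lia.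
    by rewrite /x' swpK.
  case: (eqVneq (prank x a) s.+1) => e2; last by rewrite /phi (negbTE e1) (negbTE e2).
  have hx : (1 < prank x a)%N by rewrite e2 ltnS.
  have /andP[h1 h2] := dnP x hx.
  set b := dn x; set x' := swp a b x.
  have h3 := nb_swap h1.
  have r1 : prank x' a = s.
    have := rt_up h3; rewrite /x' swpK swp_a swp_b => h; have := h h2.
    by rewrite e2 => -[].
  rewrite /phi r1 eqxx.
  have hx' : (prank x' a < a.+1)%N by rewrite r1.
  have /andP[h4 h5] := upP x' hx'.
  have -> : up x' = b.
    apply: (nb_uniq h4 h3).
    move: h5 h2; rewrite /x' /b swp_a swp_b; lia.
  by rewrite /x' swpK.
have Fphi x : F (phi x) = F x.
  rewrite /phi; case: (eqVneq (prank x a) s) => e1.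
    have hx : (prank x a < a.+1)%N by rewrite e1.
    by have /andP[h1 _] := upP x hx; apply: HF => i ia; rewrite prank_pres.
  case: (eqVneq (prank x a) s.+1) => e2 //.
  have hx : (1 < prank x a)%N by rewrite e2 ltnS.
  by have /andP[h1 _] := dnP x hx; apply: HF => i ia; rewrite prank_pres.
rewrite (reindex_inj (can_inj phiK)); apply: eq_bigr => x _.
rewrite Fphi /phi.
case: (eqVneq (prank x a) s) => e1.
  have hx : (prank x a < a.+1)%N by rewrite e1.
  have /andP[h1 h2] := upP x hx.
  by rewrite rt_up // e1 sneq (ltn_eqF (ltnSn s)).
case: (eqVneq (prank x a) s.+1) => e2; last by rewrite ?(negbTE e1) ?(negbTE e2).
have hx : (1 < prank x a)%N by rewrite e2 ltnS.
have /andP[h1 h2] := dnP x hx.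
have h3 := nb_swap h1.
have := rt_up h3; rewrite swpK swp_a swp_b => h; have := h h2.
rewrite e2 => -[->]; by rewrite eqxx.
Qed.

Lemma sum_split (R : zmodType) n (a : 'I_n) (F : 'S_n -> R) (s : nat) :
  (forall x y : 'S_n, (forall i : 'I_n, (i < a)%N -> prank x i = prank y i) -> F x = F y) ->
  (1 <= s <= a.+1)%N ->
  \sum_(x : 'S_n) F x = (\sum_(x : 'S_n) (if prank x a == s then F x else 0)) *+ a.+1.
Proof.
move=> HF /andP[s1 sa].
pose C k := \sum_(x : 'S_n) (if prank x a == k then F x else 0).
have Ck : forall k, (1 <= k <= a.+1)%N -> C k = C 1%N.
  elim=> // k IH /andP[_ ka]; case: k IH ka => // k IH ka.
  have ka1 : (k.+1 <= a.+1)%N := ltnW ka.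
  by rewrite -IH ?ka1 //; symmetry; apply: sum_shift.
have -> : \sum_(x : 'S_n) F x =
    \sum_(x : 'S_n) \sum_(1 <= k < a.+2) (if prank x a == k then F x else 0).
  apply: eq_bigr => x _.
  have hx : prank x a \in index_iota 1 a.+2 by rewrite mem_index_iota prank_ge1 ltnS prank_le.
  rewrite (bigD1_seq (prank x a)) ?iota_uniq //= eqxx big1_seq ?addr0 //.
  by move=> i /andP[ix _]; rewrite eq_sym (negbTE ix).
rewrite exchange_big /=.
rewrite (eq_big_nat _ _ (F2 := fun _ => C 1%N)); last first.
  by move=> i /andP[i1 ia]; apply: Ck; rewrite i1 -ltnS.
by rewrite sumr_const_nat subn1 /= -/(C s) (Ck s) ?s1.
Qed.

Lemma size_pranks n (s : 'S_n) : size (pranks s) = n.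
Proof. by rewrite /pranks size_map size_enum_ord. Qed.

Lemma nth_pranks n (s : 'S_n) k (hk : (k < n)%N) : nth 0%N (pranks s) k = prank s (Ordinal hk).
Proof.
rewrite /pranks (nth_map (Ordinal hk)) ?size_enum_ord //.
by rewrite -[k]/(nat_of_ord (Ordinal hk)) nth_ord_enum.
Qed.

Lemma take_pranks_eq n (x y : 'S_n) m :
  (forall i : 'I_n, (i < m)%N -> prank x i = prank y i) -> take m (pranks x) = take m (pranks y).
Proof.
move=> H; apply: (@eq_from_nth _ 0%N); first by rewrite !size_take !size_pranks.
move=> i; rewrite size_take size_pranks => hi.
have [him hin] : (i < m)%N /\ (i < n)%N by case: ifP hi => h hi; lia.
by rewrite !nth_take // !(nth_pranks _ hin) H.
Qed.

Lemma pw_take (R : realFieldType) (p : R) (P : policy R) t (rs : seq nat) (acts : (t.-1).-tuple bool) m :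
  (t.-1 <= m)%N -> path_weight p P (take m rs) acts = path_weight p P rs acts.
Proof.
move=> tm; rewrite /path_weight; apply: eq_bigr => k _ /=.
by rewrite take_takel // (leq_trans (ltn_ord k) tm).
Qed.

Lemma pw_ge0 (R : realFieldType) (p : R) (P : policy R) t (rs : seq nat) (acts : (t.-1).-tuple bool) :
  valid_policy P -> p <= 1 -> 0 <= path_weight p P rs acts.
Proof.
move=> VP p1; rewrite /path_weight; apply: prodr_ge0 => k _ /=.
have /andP[h0 h1] := VP k.+1 (take k.+1 rs) (take k acts).
case: ifP => _; first by rewrite mulr_ge0 // subr_ge0.
by rewrite subr_ge0.
Qed.

Lemma pw_rcons (R : realFieldType) (p : R) (P : policy R) m (rs : seq nat) (u : m.-tuple bool) b :
  @path_weight R p P m.+2 rs (rcons_tuple u b) =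
  @path_weight R p P m.+1 rs u *
  (let q := P m.+1 (take m.+1 rs) u in if b then q * (1 - p) else 1 - q).
Proof.
rewrite /path_weight big_ord_recr /=; congr (_ * _).
  apply: eq_bigr => k _ /=.
  have km : (k <= size u)%N by rewrite size_tuple ltnW.
  by rewrite nth_rcons size_tuple ltn_ord -cats1 takel_cat.
by rewrite nth_rcons size_tuple ltnn eqxx -cats1 take_size_cat ?size_tuple.
Qed.

Lemma sum_tuple_rcons (R : zmodType) m (F : m.+1.-tuple bool -> R) :
  \sum_(v : m.+1.-tuple bool) F v =
  \sum_(u : m.-tuple bool) (F (rcons_tuple u true) + F (rcons_tuple u false)).
Proof.
have -> : \sum_(u : m.-tuple bool) (F (rcons_tuple u true) + F (rcons_tuple u false)) =
          \sum_(u : m.-tuple bool) \sum_(b : bool) F (rcons_tuple u b).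
  by apply: eq_bigr => u _; rewrite big_bool.
rewrite pair_big /=.
rewrite (reindex (fun x : m.-tuple bool * bool => rcons_tuple x.1 x.2)) //=.
pose g (v : m.+1.-tuple bool) : m.-tuple bool * bool :=
  ([tuple of belast (head false v) (behead v)], last (head false v) (behead v)).
exists g => [[u b] _|v _].
  rewrite /g; congr pair; last by case: u => -[|x s] /= _; rewrite ?last_rcons.
  apply: val_inj => /=; by case: u => -[|x s] /= _; rewrite ?belast_rcons.
apply: val_inj => /=; rewrite -lastI.
by case: v => -[|x s].
Qed.

Lemma sum_tuple0 (R : zmodType) (F : 0.-tuple bool -> R) :
  \sum_(v : 0.-tuple bool) F v = F [tuple].
Proof.
by rewrite (big_pred1 [tuple]) // => v; apply/esym/eqP; rewrite (tuple0 v).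
Qed.

Lemma sum_ind (R : zmodType) (r lo hi : nat) (G : R) : (lo <= r < hi)%N ->
  \sum_(lo <= k < hi) (if r == k then G else 0) = G.
Proof.
move=> hr; have hx : r \in index_iota lo hi by rewrite mem_index_iota.
rewrite (bigD1_seq r) ?iota_uniq //= eqxx big1_seq ?addr0 //.
by move=> i /andP[ix _]; rewrite eq_sym (negbTE ix).
Qed.

Definition W (R : realFieldType) (p : R) (P : policy R) n t (s : 'S_n) : R :=
  \sum_(acts : (t.-1).-tuple bool) path_weight p P (take t (pranks s)) acts.

Lemma reach_tot (R : realFieldType) n (p : R) (P : policy R) t s :
  reach_prob n p P t s true + reach_prob n p P t s false =
  (#|{perm 'I_n}|%:R)^-1 *
  \sum_(x : 'S_n) (if nth 0%N (pranks x) t.-1 == s then W p P t x else 0).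
Proof.
rewrite /reach_prob -mulrDr -big_split; congr (_ * _); apply: eq_bigr => x _ /=.
rewrite -big_split /=; case: ifP => _.
  by apply: eq_bigr => acts _; rewrite -mulrDr addrC subrK mulr1.
by rewrite big1 // => acts _; rewrite addr0.
Qed.

Lemma W_inv (R : realFieldType) n (p : R) (P : policy R) t (x y : 'S_n) :
  (forall i : 'I_n, (i < t.-1)%N -> prank x i = prank y i) -> W p P t x = W p P t y.
Proof.
move=> H; rewrite /W; apply: eq_bigr => acts _.
rewrite -[LHS](pw_take p P _ acts (leqnn _)) -[RHS](pw_take p P _ acts (leqnn _)).
by rewrite !take_takel ?leq_pred // (take_pranks_eq H).
Qed.

Lemma rec_rhs (R : realFieldType) n (p : R) (P : policy R) m : (m.+2 <= n)%N ->
  lp_rhs p (fun t s => reach_prob n p P t s true) (fun t s => reach_prob n p P t s false) m.+2 =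
  (#|{perm 'I_n}|%:R)^-1 * \sum_(x : 'S_n) W p P m.+2 x.
Proof.
move=> mn; rewrite /lp_rhs /reach_prob /=.
pose G (x : 'S_n) := \sum_(acts : m.-tuple bool)
   (path_weight (t:=m.+1) p P (take m.+1 (pranks x)) acts * (1 - P m.+1 (take m.+1 (pranks x)) acts) +
    (1 - p) * (path_weight (t:=m.+1) p P (take m.+1 (pranks x)) acts * P m.+1 (take m.+1 (pranks x)) acts)).
rewrite (eq_big_nat _ _ (F2 := fun sg => (#|{perm 'I_n}|%:R)^-1 *
     \sum_(x : 'S_n) (if nth 0%N (pranks x) m == sg then G x else 0))); last first.
  move=> sg _; rewrite mulrCA -mulrDr; congr (_ * _).
  rewrite mulr_sumr -big_split; apply: eq_bigr => x _ /=.
  case: ifP => _; last by rewrite !big1 ?mulr0 ?addr0.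
  by rewrite mulr_sumr -big_split.
rewrite -mulr_sumr exchange_big /=; congr (_ * _); apply: eq_bigr => x _.
have hm : (m < n)%N by lia.
rewrite (nth_pranks _ hm) sum_ind; last by rewrite prank_ge1 /= ltnS (prank_le x (Ordinal hm)).
rewrite /G /W sum_tuple_rcons; apply: eq_bigr => u _.
rewrite !pw_rcons /=.
have h1 : (m <= m.+1)%N by [].
have h2 : (m <= m.+2)%N by lia.
rewrite (pw_take (t:=m.+1) p P _ u h1) (pw_take (t:=m.+1) p P _ u h2) take_takel //.
ring.
Qed.

Lemma cardS_neq0 (R : realFieldType) n : (#|{perm 'I_n}|%:R : R) != 0.
Proof. by rewrite card_Sn pnatr_eq0 -lt0n fact_gt0. Qed.

Lemma reach_ge0 (R : realFieldType) n (p : R) (P : policy R) t s b :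
  valid_policy P -> p <= 1 -> 0 <= reach_prob n p P t s b.
Proof.
move=> VP p1; rewrite /reach_prob mulr_ge0 ?invr_ge0 ?ler0n //.
apply: sumr_ge0 => x _; apply: sumr_ge0 => acts _; case: ifP => _ //.
apply: mulr_ge0; first exact: pw_ge0.
have /andP[h0 h1] := VP t (take t (pranks x)) acts.
by case: b => //=; rewrite subr_ge0.
Qed.

Lemma rec_lhs (R : realFieldType) n (p : R) (P : policy R) m s : (m.+2 <= n)%N -> (1 <= s <= m.+2)%N ->
  reach_prob n p P m.+2 s true + reach_prob n p P m.+2 s false =
  (m.+2%:R)^-1 * ((#|{perm 'I_n}|%:R)^-1 * \sum_(x : 'S_n) W p P m.+2 x).
Proof.
move=> mn hs; rewrite reach_tot /=.
have hm : (m.+1 < n)%N by [].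
have HF : forall x y : 'S_n, (forall i : 'I_n, (i < Ordinal hm)%N -> prank x i = prank y i) ->
     W p P m.+2 x = W p P m.+2 y by move=> x y H; apply: W_inv.
rewrite (sum_split HF hs).
under eq_bigr do rewrite (nth_pranks _ hm).
have -> : ((Ordinal hm).+1) = m.+2 by [].
by rewrite mulrnAr mulrnAr -mulrnAl -[(m.+2%:R)^-1 *+ _]mulr_natr mulVf ?mul1r ?pnatr_eq0.
Qed.

Lemma prank0 n (x : 'S_n) (h : (0 < n)%N) : prank x (Ordinal h) = 1%N.
Proof.
rewrite /prank; have -> : [set j : 'I_n | (j < Ordinal h)%N && (x j < x (Ordinal h))%N] = set0.
  by apply/setP => j; rewrite !inE ltn0.
by rewrite cards0.
Qed.

Lemma part1 (R : realFieldType) n (p : R) (P : policy R) :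
  (1 <= n)%N -> p <= 1 -> valid_policy P ->
  inPol n p (fun t s => reach_prob n p P t s true) (fun t s => reach_prob n p P t s false).
Proof.
move=> n1 p1 VP; split.
- by move=> t s _ _; rewrite !reach_ge0.
- rewrite reach_tot /=.
  under eq_bigr do rewrite (nth_pranks _ n1) prank0 eqxx /W sum_tuple0 /path_weight big_ord0.
  by rewrite sumr_const mulVf // cardS_neq0.
- move=> t s /andP[t2 tn] hs; case: t t2 tn hs => [|[|m]] // _ tn hs.
  by rewrite rec_lhs // rec_rhs.
Qed.

Lemma X_eq (R : realFieldType) n (p : R) (P : policy R) t s c :
  (forall (x : 'S_n) (acts : (t.-1).-tuple bool), nth 0%N (pranks x) t.-1 = s ->
     P t (take t (pranks x)) acts = c) ->
  reach_prob n p P t s true = c * (reach_prob n p P t s true + reach_prob n p P t s false).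
Proof.
move=> H; rewrite reach_tot {1}/reach_prob mulrCA; congr (_ * _).
rewrite mulr_sumr; apply: eq_bigr => x _; case: ifP => e; last by rewrite big1 ?mulr0.
by rewrite mulr_sumr; apply: eq_bigr => acts _ /=; rewrite H ?(eqP e) // mulrC.
Qed.

Theorem theorem1 (R : realFieldType) (n : nat) (p : R) :
  (1 <= n)%N -> 0 < p <= 1 ->
  (forall P : policy R, valid_policy P ->
     inPol n p (fun t s => reach_prob n p P t s true)
               (fun t s => reach_prob n p P t s false)) /\
  (forall x y : nat -> nat -> R, inPol n p x y ->
     forall P : policy R, valid_policy P -> induced_policy n p x y P ->
     forall t s, (1 <= t <= n)%N -> (1 <= s <= t)%N ->
       x t s = reach_prob n p P t s true /\ y t s = reach_prob n p P t s false).
Proof.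
move=> n1 /andP[p0 p1]; split; first by move=> P VP; apply: part1.
move=> x y [Hnn H11 Hrec] P VP IP.
have [Xnn X11 Xrec] := part1 n1 p1 VP.
elim=> [//|t IH] s /andP[_ tn] hs.
case: t IH tn hs => [|m] IH tn hs.
  have s1 : s = 1%N by lia.
  subst s.
  have HX : reach_prob n p P 1 1 true = x 1%N 1%N *
      (reach_prob n p P 1 1 true + reach_prob n p P 1 1 false).
    apply: X_eq => sg acts _.
    have hsz : size (take 1 (pranks sg)) = 1%N by rewrite size_takel // size_pranks.
    have t1 : (1 <= 1 <= n)%N by rewrite n1.
    have [h _] := IP 1%N (take 1 (pranks sg)) acts t1 hsz (size_tuple acts).
    exact: h.
  rewrite X11 mulr1 in HX; split; first by rewrite HX.
  by apply/(addrI (x 1%N 1%N)); rewrite H11 -{1}HX X11.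
have m2n : (m.+2 <= n)%N by [].
have LP : lp_rhs p (fun t s => reach_prob n p P t s true) (fun t s => reach_prob n p P t s false) m.+2
          = lp_rhs p x y m.+2.
  rewrite /lp_rhs; apply: eq_big_nat => sg hsg /=.
  have m1n : (0 < m.+1 <= n)%N by lia.
  have [e1 e2] := IH sg m1n hsg.
  by rewrite e1 e2.
have tnl : (2 <= m.+2 <= n)%N by [].
have Hxy := Hrec m.+2 s tnl hs.
have HXY := Xrec m.+2 s tnl hs; rewrite /= LP in HXY.
have tn1 : (1 <= m.+2 <= n)%N by [].
have [hx hy] := Hnn m.+2 s tn1 hs.
have hX := reach_ge0 n m.+2 s true VP p1.
have hY := reach_ge0 n m.+2 s false VP p1.
set D := lp_rhs p x y m.+2 in Hxy HXY.
case: (eqVneq D 0) => D0.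
  rewrite D0 mulr0 in Hxy HXY.
  move: (paddr_eq0 hx hy) (paddr_eq0 hX hY); rewrite Hxy HXY eqxx.
  by move=> /esym/andP[/eqP -> /eqP ->] /esym/andP[/eqP -> /eqP ->].
have HX := @X_eq R n p P m.+2 s (m.+2%:R * x m.+2 s / D).
have eX : x m.+2 s = reach_prob n p P m.+2 s true.
  rewrite HX ?HXY.
    field; rewrite D0 andbT; apply: lt0r_neq0; have := ler0n R m; lra.
  move=> sg acts e.
  have hsz : size (take m.+2 (pranks sg)) = m.+2 by rewrite size_takel // size_pranks.
  have [_ h] := IP m.+2 (take m.+2 (pranks sg)) acts tn1 hsz (size_tuple acts).
  rewrite h //.
  by rewrite -nth_last hsz nth_take // e.
split => //.
apply/(addrI (x m.+2 s)); by rewrite Hxy {1}eX HXY.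
Qed.
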